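(* If a UCPT$(n)$-map $T$ has an exact factorization through $M_n(\mathbb{C})\otimes M_k(\mathbb{C})$ for some integer $k\geq1$, then $T$ is factorizable of degree $k$.
   Context: A UCPT$(n)$-map is a unital completely positive trace-preserving linear map on $M_n(\mathbb{C})$; $\tau_k$ is the normalized trace on $M_k(\mathbb{C})$. $T$ has an exact factorization through $M_n(\mathbb{C})\otimes M_k(\mathbb{C})$ if there is a unitary $u\in M_n(\mathbb{C})\otimes M_k(\mathbb{C})$ with $T(x)=(\mathrm{id}_n\otimes\tau_k)(u^*(x\otimes1_k)u)$ for all $x\in M_n(\mathbb{C})$. $T$ is factorizable of degree $k$ if $T\otimes S_k\in\mathrm{conv}(\mathrm{Aut}(M_n(\mathbb{C})\otimes M_k(\mathbb{C})))$, where $S_k(y)=\tau_k(y)1_k$, $\mathrm{Aut}$ consists of the maps $x\mapsto u^*xu$ with $u$ unitary, and $\mathrm{conv}$ is convex hull. *)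

(* Defs.v *)
From HB Require Import structures.
From mathcomp Require Import all_boot all_order all_algebra.
From mathcomp Require Import reals complex mxtens.
Set Implicit Arguments. Unset Strict Implicit. Unset Printing Implicit Defensive.
Import Order.TTheory GRing.Theory Num.Theory.
Local Open Scope ring_scope.

Definition adj (C : numClosedFieldType) m n (A : 'M[C]_(m, n)) : 'M[C]_(n, m) :=
  (map_mx Num.conj A)^T.

Definition unitary (C : numClosedFieldType) m (u : 'M[C]_m) : Prop :=
  adj u *m u = 1%:M /\ u *m adj u = 1%:M.

Definition psd (C : numClosedFieldType) m (A : 'M[C]_m) : Prop :=
  exists B : 'M[C]_m, A = adj B *m B.

Definition is_linear (C : numClosedFieldType) p q (T : 'M[C]_p -> 'M[C]_q) :=
  forall (c : C) x y, T (c *: x + y) = c *: T x + T y.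

(* M_n(C) (x) M_k(C) is identified with M_(n*k)(C) via the Kronecker
   product tensmx (x (x) y = x *t y), index (i,a) |-> i*k + a. *)

(* the (a,b) block of X in M_n (x) M_k, i.e. X = \sum_(a,b) block X a b (x) e_ab *)
Definition block (C : numClosedFieldType) n k (X : 'M[C]_(n * k)) (a b : 'I_k)
  : 'M[C]_n :=
  \matrix_(i, j) X (mxtens_index (i, a)) (mxtens_index (j, b)).

(* tensor product of linear maps: (Phi (x) Psi)(x (x) e_ab) = Phi x (x) Psi e_ab *)
Definition tens_map (C : numClosedFieldType) n k
  (Phi : 'M[C]_n -> 'M[C]_n) (Psi : 'M[C]_k -> 'M[C]_k) (X : 'M[C]_(n * k))
  : 'M[C]_(n * k) :=
  \sum_(a < k) \sum_(b < k) (Phi (block X a b) *t Psi (delta_mx a b)).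

Definition ntr (C : numClosedFieldType) k (y : 'M[C]_k) : C := \tr y / k%:R.

Definition Smap (C : numClosedFieldType) k (y : 'M[C]_k) : 'M[C]_k := ntr y *: 1%:M.

(* id_n (x) tau_k : M_n (x) M_k -> M_n *)
Definition ptrace (C : numClosedFieldType) n k (X : 'M[C]_(n * k)) : 'M[C]_n :=
  \sum_(a < k) \sum_(b < k) (ntr (delta_mx a b : 'M[C]_k) *: block X a b).

Definition completely_positive (C : numClosedFieldType) n (T : 'M[C]_n -> 'M[C]_n) :=
  forall (m : nat) (X : 'M[C]_(n * m)),
    psd X -> psd (tens_map T (fun y : 'M[C]_m => y) X).

Definition UCPT (C : numClosedFieldType) n (T : 'M[C]_n -> 'M[C]_n) : Prop :=
  [/\ is_linear T, T 1%:M = 1%:M, completely_positive T &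
      forall x, \tr (T x) = \tr x].

Definition exact_factorization (C : numClosedFieldType) n k
  (T : 'M[C]_n -> 'M[C]_n) : Prop :=
  exists u : 'M[C]_(n * k), unitary u /\
    forall x : 'M[C]_n, T x = ptrace (adj u *m (x *t (1%:M : 'M[C]_k)) *m u).

(* T (x) S_k lies in conv(Aut(M_n (x) M_k)) *)
Definition factorizable_of_degree (C : numClosedFieldType) n k
  (T : 'M[C]_n -> 'M[C]_n) : Prop :=
  exists (m : nat) (lam : 'I_m -> C) (U : 'I_m -> 'M[C]_(n * k)),
    [/\ forall i, 0 <= lam i, \sum_(i < m) lam i = 1,
        forall i, unitary (U i) &
        forall X : 'M[C]_(n * k),
          tens_map T (@Smap C k) X = \sum_(i < m) lam i *: (adj (U i) *m X *m U i)].

(* Main.v *)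
Require Import Defs.
From HB Require Import structures.
From mathcomp Require Import all_boot all_order all_algebra.
From mathcomp Require Import reals complex mxtens.
Import Order.TTheory GRing.Theory Num.Theory.
Local Open Scope ring_scope.
Set Implicit Arguments. Unset Strict Implicit.
Section Helpers.
Variable C : numClosedFieldType.

Lemma adj_tens m n p q (A : 'M[C]_(m, n)) (B : 'M[C]_(p, q)) :
  adj (A *t B) = adj A *t adj B.
Proof. by apply/matrixP=> i j; rewrite !mxE rmorphM. Qed.

Lemma adj_mul m n p (A : 'M[C]_(m, n)) (B : 'M[C]_(n, p)) :
  adj (A *m B) = adj B *m adj A.
Proof. by rewrite /adj map_mxM trmx_mul. Qed.

Lemma adjKm m n (A : 'M[C]_(m, n)) : adj (adj A) = A.
Proof. by apply/matrixP=> i j; rewrite !mxE conjCK. Qed.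

Lemma adj1m m : adj (1%:M : 'M[C]_m) = 1%:M.
Proof. by apply/matrixP=> i j; rewrite !mxE eq_sym rmorph_nat. Qed.

Lemma tens11 m p : (1%:M : 'M[C]_m) *t (1%:M : 'M[C]_p) = 1%:M.
Proof.
apply/matrixP=> i j.
case: (mxtens_indexP i)=> i0 i1; case: (mxtens_indexP j)=> j0 j1.
rewrite tensmxE !mxE (inj_eq (can_inj (@mxtens_indexK m p))) xpair_eqE.
by rewrite -natrM mulnb.
Qed.

Lemma unitary_tens m p (A : 'M[C]_m) (B : 'M[C]_p) :
  unitary A -> unitary B -> unitary (A *t B).
Proof.
move=> [h1 h2] [h3 h4]; split; rewrite adj_tens tensmx_mul.
  by rewrite h1 h3 tens11.
by rewrite h2 h4 tens11.
Qed.

Lemma unitary_mul m (A B : 'M[C]_m) :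
  unitary A -> unitary B -> unitary (A *m B).
Proof.
move=> [h1 h2] [h3 h4]; split; rewrite adj_mul.
  by rewrite mulmxA -(mulmxA _ _ A) h1 mulmx1 h3.
by rewrite mulmxA -(mulmxA _ B) h4 mulmx1 h2.
Qed.

Lemma unitary1 m : unitary (1%:M : 'M[C]_m).
Proof. by split; rewrite adj1m mulmx1. Qed.

Lemma tensmx_suml m n p q I (r : seq I) (P : pred I) (F : I -> 'M[C]_(m, n))
  (B : 'M[C]_(p, q)) :
  (\sum_(i <- r | P i) F i) *t B = \sum_(i <- r | P i) (F i *t B).
Proof.
apply/matrixP=> i j; rewrite summxE !mxE summxE mulr_suml.
by apply: eq_bigr=> x _; rewrite !mxE.
Qed.

Lemma tensmx_sumr m n p q I (r : seq I) (P : pred I) (F : I -> 'M[C]_(p, q))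
  (A : 'M[C]_(m, n)) :
  A *t (\sum_(i <- r | P i) F i) = \sum_(i <- r | P i) (A *t F i).
Proof.
apply/matrixP=> i j; rewrite summxE !mxE summxE mulr_sumr.
by apply: eq_bigr=> x _; rewrite !mxE.
Qed.

Lemma tensmxZl m n p q c (A : 'M[C]_(m, n)) (B : 'M[C]_(p, q)) :
  (c *: A) *t B = c *: (A *t B).
Proof. by apply/matrixP=> i j; rewrite !mxE mulrA. Qed.

Lemma tensmxZr m n p q c (A : 'M[C]_(m, n)) (B : 'M[C]_(p, q)) :
  A *t (c *: B) = c *: (A *t B).
Proof. by apply/matrixP=> i j; rewrite !mxE mulrCA. Qed.

Lemma block_decomp n k (X : 'M[C]_(n * k)) :
  X = \sum_(a < k) \sum_(b < k) (block X a b *t delta_mx a b).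
Proof.
apply/matrixP=> i j.
case: (mxtens_indexP i)=> i0 i1; case: (mxtens_indexP j)=> j0 j1.
rewrite summxE (bigD1 i1) //= summxE (bigD1 j1) //= tensmxE !mxE !eqxx mulr1.
rewrite big1 ?addr0; last first.
  by move=> b hb; rewrite tensmxE !mxE eqxx eq_sym (negbTE hb) andbF mulr0.
rewrite big1 ?addr0 //.
move=> a ha; rewrite summxE big1 // => b _.
by rewrite tensmxE !mxE eq_sym (negbTE ha) mulr0.
Qed.

End Helpers.
Section Core.
Variable C : numClosedFieldType.
Variable K : nat.
Local Notation k := K.+1.
Local Notation S := {ffun 'I_k -> bool}.

Definition sg (b : bool) : C := if b then -1 else 1.

Lemma sgK b : sg b * sg b = 1.
Proof. by case: b; rewrite /sg ?mulrNN mulr1. Qed.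

Lemma conj_sg b : (sg b)^* = sg b.
Proof. by case: b; rewrite /sg ?rmorphN rmorph1. Qed.

Definition flip (p : 'I_k) (s : S) : S := [ffun x => if x == p then ~~ s x else s x].

Lemma flipK p : involutive (flip p).
Proof.
move=> s; apply/ffunP=> x; rewrite !ffunE.
by case: (x == p); rewrite ?negbK.
Qed.

Lemma sg_sum (p q : 'I_k) :
  \sum_(s : S) sg (s p) * sg (s q) = if p == q then #|S|%:R else 0.
Proof.
case: eqP=> [<-|/eqP hpq].
  by rewrite (eq_bigr (fun _ => 1)) ?sumr_const ?card_ffun // => s _; rewrite sgK.
set X := \sum_(s : S) _.
have hX : X = - X.
  rewrite {1}/X (reindex_inj (inv_inj (flipK p))) /= -sumrN.
  apply: eq_bigr=> s _; rewrite !ffunE eqxx eq_sym (negbTE hpq).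
  by case: (s p); rewrite /sg ?mulN1r ?mul1r ?opprK.
have : X *+ 2 == 0 by rewrite mulr2n {1}hX addNr.
by rewrite mulrn_eq0 /= => /eqP.
Qed.

Definition Wm (s : S) (j : 'I_k) : 'M[C]_k :=
  \matrix_(a, b) ((a == b + j)%:R * sg (s a)).

Lemma Wm_unitary s j : unitary (Wm s j).
Proof.
split; apply/matrixP=> c d; rewrite !mxE.
  rewrite (bigD1 (c + j)) //= big1 ?addr0; last first.
    by move=> x /negbTE hx; rewrite !mxE hx mul0r rmorph0 mul0r.
  rewrite !mxE eqxx rmorphM /= conj_sg rmorph_nat (inj_eq (addIr j)).
  by case: (eqVneq c d)=> [->|h] /=; rewrite ?mul1r ?sgK ?mul0r ?mulr0.
rewrite (bigD1 (c - j)) //= big1 ?addr0; last first.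
  move=> x hx; rewrite !mxE.
  have -> : (c == x + j) = false.
    by apply/negbTE; apply: contra hx=> /eqP ->; rewrite addrK.
  by rewrite mul0r mul0r.
rewrite !mxE subrK eqxx rmorphM /= conj_sg rmorph_nat.
rewrite eq_sym.
by case: (eqVneq c d)=> [->|h] /=; rewrite ?mul1r ?sgK ?mul0r ?mulr0.
Qed.

Lemma mul_delta_entry (A B : 'M[C]_k) p q c d :
  (A *m delta_mx p q *m B) c d = A c p * B q d.
Proof.
rewrite mxE (bigD1 q) //= big1 ?addr0; last first.
  move=> x hx; rewrite mxE (bigD1 p) //= big1 ?addr0.
    by rewrite mxE (negbTE hx) andbF mulr0 mul0r.
  by move=> y hy; rewrite mxE (negbTE hy) mulr0.
rewrite mxE (bigD1 p) //= big1 ?addr0.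
  by rewrite mxE !eqxx mulr1.
by move=> y hy; rewrite mxE (negbTE hy) mulr0.
Qed.

Lemma core_avg (p q : 'I_k) :
  \sum_(g : S * 'I_k) adj (Wm g.1 g.2) *m delta_mx p q *m Wm g.1 g.2
  = ((p == q)%:R * #|S|%:R) *: 1%:M.
Proof.
apply/matrixP=> c d; rewrite summxE.
under eq_bigr=> g _ do rewrite mul_delta_entry !mxE rmorphM /= conj_sg rmorph_nat.
rewrite -(pair_bigA _ (fun (s : S) (j : 'I_k) => (p == c + j)%:R * sg (s p) * ((q == d + j)%:R * sg (s q)))) /=.
rewrite exchange_big /=.
under eq_bigr=> j _.
  under eq_bigr=> s _ do rewrite mulrACA.
  rewrite -mulr_sumr sg_sum.
over.
rewrite /= !mxE.
case: (eqVneq p q)=> [<-|hpq]; last first.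
  by rewrite mul0r mul0r big1 // => j _; rewrite mulr0.
rewrite mul1r; case: (eqVneq c d)=> [<-|hcd].
  rewrite (bigD1 (p - c)) //= big1 ?addr0; last first.
    move=> j hj; have -> : (p == c + j) = false.
      by apply/negbTE; apply: contra hj=> /eqP ->; rewrite addrC addKr.
    by rewrite mul0r mul0r.
  by rewrite addrC subrK eqxx !mul1r mulr1.
rewrite mulr0 big1 // => j _.
case: (eqVneq p (c + j))=> [hc|]; last by rewrite mul0r mul0r.
case: (eqVneq p (d + j))=> [hd|]; last by rewrite mulr0 mul0r.
by move: hcd; rewrite -(inj_eq (addIr j)) -hc -hd eqxx.
Qed.

End Core.
Section Main.
Variable C : numClosedFieldType.
Variables (n K : nat).
Local Notation k := K.+1.
Local Notation S := {ffun 'I_k -> bool}.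
Local Notation G := (S * 'I_k)%type.

Lemma tr_delta (a b : 'I_k) : \tr (delta_mx a b : 'M[C]_k) = (a == b)%:R.
Proof.
rewrite /mxtrace (bigD1 a) //= big1 ?addr0; first by rewrite mxE eqxx.
by move=> i hi; rewrite mxE (negbTE hi).
Qed.

Lemma ntr_delta (a b : 'I_k) : ntr (delta_mx a b : 'M[C]_k) = (a == b)%:R / k%:R.
Proof. by rewrite /ntr tr_delta. Qed.

Lemma kneq0 : (k%:R : C) != 0.
Proof. by rewrite pnatr_eq0. Qed.

Definition V (g : G) : 'M[C]_(n * k) := (1%:M : 'M[C]_n) *t Wm C g.1 g.2.

Lemma V_unitary g : unitary (V g).
Proof. exact: unitary_tens (unitary1 _ _) (Wm_unitary _ _ _). Qed.

Lemma ptrace_tens (X : 'M[C]_(n * k)) :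
  ptrace X *t (1%:M : 'M[C]_k) =
  \sum_(a < k) \sum_(b < k) (((a == b)%:R / k%:R) *: (block X a b *t 1%:M)).
Proof.
rewrite /ptrace tensmx_suml; apply: eq_bigr=> a _.
rewrite tensmx_suml; apply: eq_bigr=> b _.
by rewrite tensmxZl ntr_delta.
Qed.

Lemma E_avg (X : 'M[C]_(n * k)) :
  \sum_(g : G) adj (V g) *m X *m V g = #|{: G}|%:R *: (ptrace X *t 1%:M).
Proof.
rewrite ptrace_tens scaler_sumr.
under eq_bigr=> g _.
  rewrite [X in _ *m X *m _]block_decomp mulmx_sumr mulmx_suml.
  under eq_bigr=> a _.
    rewrite mulmx_sumr mulmx_suml.
    under eq_bigr=> b _ do rewrite /V adj_tens adj1m !tensmx_mul mul1mx mulmx1.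
  over.
over.
rewrite /= exchange_big /=; apply: eq_bigr=> a _.
rewrite exchange_big /= scaler_sumr; apply: eq_bigr=> b _.
rewrite -tensmx_sumr core_avg tensmxZr scalerA; congr (_ *: _).
rewrite card_prod card_ord natrM mulrCA mulrA -[X in _ = X]mulrA.
by rewrite -mulrA mulfV ?kneq0 ?mulr1.
Qed.

Lemma T0 (T : 'M[C]_n -> 'M[C]_n) : is_linear T -> T 0 = 0.
Proof.
move=> hT; have := hT 1 0 0; rewrite scale1r addr0 scale1r => h.
by apply: (addrI (T 0)); rewrite addr0 -h.
Qed.

Lemma T_sum (T : 'M[C]_n -> 'M[C]_n) : is_linear T ->
  forall I (r : seq I) (x : I -> 'M[C]_n),
  T (\sum_(i <- r) x i) = \sum_(i <- r) T (x i).
Proof.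
move=> hT I r x; elim: r=> [|i r IH]; first by rewrite !big_nil (T0 hT).
by rewrite !big_cons -IH -[T (x i)]scale1r -hT scale1r.
Qed.

Lemma T_scale (T : 'M[C]_n -> 'M[C]_n) : is_linear T ->
  forall c x, T (c *: x) = c *: T x.
Proof. by move=> hT c x; rewrite -[c *: x]addr0 hT (T0 hT) addr0. Qed.

Theorem main_gen (T : 'M[C]_n -> 'M[C]_n) :
  UCPT T -> exact_factorization k T -> factorizable_of_degree k T.
Proof.
case=> hlin _ _ _ [u [hu hT]].
pose H := (G * G)%type.
pose m := #|[pred x : H | true]|.
have hm : (m%:R : C) != 0.
  rewrite pnatr_eq0 -lt0n; apply/card_gt0P.
  by exists (([ffun=> false], ord0), ([ffun=> false], ord0)).
exists m, (fun _ => (m%:R)^-1),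
  (fun i => let g := enum_val i in V g.2 *m u *m V g.1).
split.
- by move=> _; rewrite invr_ge0 ler0n.
- by rewrite sumr_const card_ord -[_ *+ _]mulr_natl mulfV.
- by move=> i /=; exact: unitary_mul (unitary_mul (V_unitary _) hu) (V_unitary _).
move=> X.
have LHS : tens_map T (@Smap C k) X = ptrace (adj u *m (ptrace X *t 1%:M) *m u) *t 1%:M.
  rewrite -hT /ptrace (T_sum hlin) tensmx_suml /tens_map; apply: eq_bigr=> a _.
  rewrite (T_sum hlin) tensmx_suml; apply: eq_bigr=> b _.
  by rewrite (T_scale hlin) /Smap tensmxZr tensmxZl.
rewrite LHS; set PX := ptrace X *t 1%:M.
have key : forall g1 g2 : G, adj (V g2 *m u *m V g1) *m X *m (V g2 *m u *m V g1)
   = adj (V g1) *m (adj u *m (adj (V g2) *m X *m V g2) *m u) *m V g1.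
  by move=> g1 g2; rewrite !adj_mul !mulmxA.
rewrite -scaler_sumr.
rewrite -(big_enum_val (A := [pred x : H | true])
  (fun g : H => adj (V g.2 *m u *m V g.1) *m X *m (V g.2 *m u *m V g.1))).
rewrite (eq_bigl (fun _ => true)) //.
rewrite -(pair_big (fun _ => true) (fun _ => true)
  (fun g1 g2 : G => adj (V g2 *m u *m V g1) *m X *m (V g2 *m u *m V g1))) /=.
under eq_bigr=> g1 _.
  under eq_bigr=> g2 _ do rewrite key.
  rewrite -mulmx_suml -mulmx_sumr -mulmx_suml -mulmx_sumr E_avg.
  rewrite -scalemxAr -scalemxAl -scalemxAr -scalemxAl.
over.
rewrite /= -scaler_sumr -/PX E_avg !scalerA /m.
have hc : #|[pred: H | true]| = (#|{: G}| * #|{: G}|)%N.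
  by rewrite -card_prod; apply: eq_card.
by rewrite -mulrA -natrM -hc mulVf // scale1r.
Qed.

End Main.
Unset Implicit Arguments.

Theorem corollary3p5 (R : realType) (n k : nat) (T : 'M[R[i]]_n -> 'M[R[i]]_n) :
  (0 < k)%N -> UCPT T -> exact_factorization k T -> factorizable_of_degree k T.
Proof.
case: k => [//|K] _.
exact: (@main_gen (R[i]) n K T).
Qed.
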